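(* Assume the setting of the previous statement: $(U,V_1)\sim p(u,v_1)$, a measurable real function $f(u,v)$, $c(u)=\mathbf{E}_{v\sim p(v)}[e^{f(u,v)}]<\infty$, Borel sets $B_u\subset(c(u),\infty)$ with $S_{B_u}=\{v: e^{f(u,v)}\in B_u\}$ and $p(S_{B_u})>0$, and $q(\cdot\mid u)$ the law of $V_{2:k}=(V_2,\dots,V_k)$ drawn i.i.d. from $p(v)$ conditioned on $S_{B_u}$. For fixed $(u,v_1)$ define $$Z(v_{2:k})=\log\frac{e^{f(u,v_1)}}{\frac1k\sum_{j=1}^k e^{f(u,v_j)}}.$$ Let $p(v_{2:k})$ denote the law of $V_{2:k}$ drawn i.i.d. from $p(v)$, and let $\tilde q(\cdot\mid u)$ denote $p(v_{2:k})$ conditioned on the complement of the event on which $q$ conditions (i.e. $\tilde q(A)=p(A\mid S_{B_u}^c)$ in the paper's notation), assumed to have positive probability. For a distribution $r$ of the negatives, define $\mathrm{Bias}_r(Z)=\mathcal{I}(U;V_1)-\mathbf{E}_{(u,v_1)\sim p(u,v_1)}\mathbf{E}_{v_{2:k}\sim r}[Z]$ and $\mathrm{Var}_r(Z)=\mathrm{Var}_{v_{2:k}\sim r}[Z]$. Suppose $S_{B_u}$ is chosen so that $\mathrm{Var}_{q(v_{2:k})}[Z]\le\mathrm{Var}_{\tilde q(v_{2:k})}[Z]$. Then $$\mathrm{Bias}_p(Z)\le\mathrm{Bias}_q(Z)\quad\text{and}\quad \mathrm{Var}_p(Z)\ge\mathrm{Var}_q(Z),$$ that is, sampling the negatives $v_{2:k}\sim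 q$ instead of $p$ trades higher bias for lower variance.
   Context: $\mathbf{E}_{p(v_{2:k})}[Z]$ (averaged over $(u,v_1)$) is the NCE estimator and $\mathbf{E}_{q(v_{2:k})}[Z]$ the conditional NCE (CNCE) estimator of the mutual information $\mathcal{I}(U;V_1)$; both are lower bounds on $\mathcal{I}(U;V_1)$ with the CNCE value at most the NCE value. *)

(* Defs.v *)
From HB Require Import structures.
From mathcomp Require Import all_boot all_order all_algebra.
From mathcomp Require Import all_classical all_reals all_analysis.
Set Implicit Arguments. Unset Strict Implicit. Unset Printing Implicit Defensive.
Import Order.TTheory GRing.Theory Num.Theory.
Import numFieldNormedType.Exports.
Local Open Scope classical_set_scope.
Local Open Scope ring_scope.

Section proj_mfun.
Context d1 d2 (T1 : measurableType d1) (T2 : measurableType d2).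
Definition proj1_fun (x : T1 * T2) : T1 := x.1.
Definition proj2_fun (x : T1 * T2) : T2 := x.2.
HB.instance Definition _ := isMeasurableFun.Build _ _ _ _ proj1_fun measurable_fst.
HB.instance Definition _ := isMeasurableFun.Build _ _ _ _ proj2_fun measurable_snd.
End proj_mfun.

Section defs.
Context (R : realType) (dU dV : measure_display)
  (U : measurableType dU) (V : measurableType dV)
  (PUV : probability (U * V)%type R).

Local Notation margU := (distribution PUV (@proj1_fun _ _ U V)).
Local Notation margV := (distribution PUV (@proj2_fun _ _ U V)).

(** Mutual information I(U;V1) = KL(P_{UV} || P_U (x) P_V), defined as
    \int log (dP_{UV}/d(P_U (x) P_V)) dP_{UV} when P_{UV} << P_U (x) P_V,
    and +oo otherwise. *)
Definition mutual_info : \bar R :=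
  match pselect (charge_of_finite_measure PUV `<< (product_subprobability (margU : subprobability U R, margV : subprobability V R))) with
  | left _ => (\int[PUV]_x
      (ln (fine (Radon_Nikodym (charge_of_finite_measure PUV)
                   (product_subprobability (margU : subprobability U R, margV : subprobability V R)) x)))%:E)%E
  | right _ => +oo%E
  end.
End defs.

Notation margU PUV := (distribution PUV (@proj1_fun _ _ _ _)).
Notation margV PUV := (distribution PUV (@proj2_fun _ _ _ _)).

Section cond.
Context (R : realType) (dO : measure_display) (O : measurableType dO)
  (P : probability O R).

Definition cexpect (A : set O) (X : O -> R) : \bar R :=
  ((fine (P A))^-1%:E * \int[P]_(w in A) (X w)%:E)%E.

Definition cvar (A : set O) (X : O -> R) : \bar R :=
  cexpect A (fun w => (X w - fine (cexpect A X)) ^+ 2).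

Definition iid_with_law dV (V : measurableType dV) n (X : 'I_n -> O -> V)
    (mu : set V -> \bar R) : Prop :=
  (forall j A, measurable A -> P (X j @^-1` A) = mu A) /\
  (forall A : 'I_n -> set V, (forall j, measurable (A j)) ->
     P [set w | forall j, X j w \in A j] =
     (\prod_(j < n) P (X j @^-1` A j))%E).
End cond.

(** The critic f, negatives V_2..V_k given as Vn 0 .. Vn (n-1), k = n+1. *)
Definition Zstat (R : realType) dU dV dO (U : measurableType dU)
  (V : measurableType dV) (O : measurableType dO) (f : U -> V -> R) n
  (Vn : 'I_n -> O -> V) (u : U) (v1 : V) (w : O) : R :=
  ln (expR (f u v1) /
      ((n.+1%:R)^-1 * (expR (f u v1) + \sum_(j < n) expR (f u (Vn j w))))).

Definition cfun (R : realType) dU dV (U : measurableType dU)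
  (V : measurableType dV) (PUV : probability (U * V)%type R)
  (f : U -> V -> R) (u : U) : \bar R :=
  (\int[margV PUV]_v (expR (f u v))%:E)%E.

Definition S_B (R : realType) dU dV (U : measurableType dU)
  (V : measurableType dV) (f : U -> V -> R) (B : U -> set R) (u : U) : set V :=
  [set v | B u (expR (f u v))].

(** The event on which q conditions: all negatives V_2..V_k lie in S_{B_u}. *)
Definition negs_in (dV dO : measure_display) (V : measurableType dV)
  (O : measurableType dO) n (Vn : 'I_n -> O -> V) (S : set V) : set O :=
  [set w | forall j, S (Vn j w)].

(** Bias_r(Z) = I(U;V1) - E_{(u,v1) ~ p(u,v1)} E_{v_{2:k} ~ r}[Z], where the
    law r of the negatives (given u) is P conditioned on the event A u. *)
Definition Bias (R : realType) dU dV dO (U : measurableType dU)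
  (V : measurableType dV) (O : measurableType dO)
  (PUV : probability (U * V)%type R) (P : probability O R) (A : U -> set O)
  (f : U -> V -> R) n (Vn : 'I_n -> O -> V) : \bar R :=
  (mutual_info PUV - \int[PUV]_x cexpect P (A x.1) (Zstat f Vn x.1 x.2))%E.

(* Main.v *)
Require Import Defs.
From HB Require Import structures.
From mathcomp Require Import all_boot all_order all_algebra.
From mathcomp Require Import all_classical all_reals all_analysis.
Import Order.TTheory GRing.Theory Num.Theory.
Local Open Scope classical_set_scope.
Local Open Scope ring_scope.
From mathcomp Require Import measurable_realfun.
From mathcomp Require Import ring lra.

Lemma le_integral_nm (R : realType) d (T : measurableType d)
  (mu : {measure set T -> \bar R}) (f g : T -> \bar R) :
  (forall x, (f x <= g x)%E) ->
  (\int[mu]_x f x <= \int[mu]_x g x)%E.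
Proof.
move=> fg; rewrite /integral; apply: leeB; apply: ereal_sup_le.
- move=> _ [h hf <-]; exists h => //= x; apply: (le_trans (hf x)).
  apply: (@funepos_le _ _ setT); last by rewrite in_setE.
  by move=> y _; rewrite /patch; case: ifP.
- move=> _ [h hf <-]; exists h => //= x; apply: (le_trans (hf x)).
  apply: (@funeneg_le _ _ setT); last by rewrite in_setE.
  by move=> y _; rewrite /patch; case: ifP.
Qed.

Lemma alg_var (R : realFieldType) (pA pC a1 a2 c1 c2 : R) :
  0 < pA -> 0 < pC -> pC = 1 - pA ->
  pA^-1 * (a2 - 2 * (pA^-1 * a1) * a1 + (pA^-1 * a1) ^+ 2 * pA) <=
  pC^-1 * (c2 - 2 * (pC^-1 * c1) * c1 + (pC^-1 * c1) ^+ 2 * pC) ->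
  pA^-1 * (a2 - 2 * (pA^-1 * a1) * a1 + (pA^-1 * a1) ^+ 2 * pA) <=
  a2 + c2 - 2 * (a1 + c1) * (a1 + c1) + (a1 + c1) ^+ 2.
Proof.
move=> hA hC hS.
set VA := pA^-1 * _. set VC := pC^-1 * _ => hV.
set x := pA^-1 * a1. set y := pC^-1 * c1.
have pA0 : pA != 0 by rewrite gt_eqF.
have pC0 : pC != 0 by rewrite gt_eqF.
have ha1 : a1 = pA * x by rewrite /x mulrA divff // mul1r.
have hc1 : c1 = pC * y by rewrite /y mulrA divff // mul1r.
have ha2 : a2 = pA * (VA + x ^+ 2) by rewrite /VA /x; field.
have hc2 : c2 = pC * (VC + y ^+ 2) by rewrite /VC /y; field.
rewrite ha2 hc2 ha1 hc1 -subr_ge0.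
clearbody x y VA VC.
have -> : pA * (VA + x ^+ 2) + pC * (VC + y ^+ 2) - 2 * (pA * x + pC * y) * (pA * x + pC * y) +
  (pA * x + pC * y) ^+ 2 - VA = pC * (VC - VA) + pA * pC * (x - y) ^+ 2.
  by rewrite hS; ring.
apply: addr_ge0.
  by apply: mulr_ge0; [exact: ltW|rewrite subr_ge0].
by apply: mulr_ge0; [apply: mulr_ge0; apply: ltW|apply: sqr_ge0].
Qed.

Lemma ln_le_sub1 (R : realType) (t : R) : 0 < t -> ln t <= t - 1.
Proof.
move=> t0; have := @le_ln1Dx R (t - 1).
have -> : 1 + (t - 1) = t by ring.
by apply; lra.
Qed.

Lemma Zsplit (R : realType) (a Y s k : R) : 0 < a -> 0 < Y -> 0 < a + s -> 0 < k ->
  ln (a / (k^-1 * (a + s))) = ln (a / (k^-1 * Y)) + ln (Y / (a + s)).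
Proof.
move=> a0 Y0 s0 k0.
rewrite -lnM ?posrE; last 2 first.
- by apply: divr_gt0 => //; apply: mulr_gt0; rewrite ?invr_gt0.
- exact: divr_gt0.
congr ln; field.
by apply/and3P; split; rewrite gt_eqF.
Qed.

Lemma Zlow (R : realType) (a Y s k : R) : 0 < a -> 0 < Y -> 0 < a + s -> 0 < k ->
  ln (a / (k^-1 * Y)) - (a + s - Y) / Y <= ln (a / (k^-1 * (a + s))).
Proof.
move=> a0 Y0 s0 k0; rewrite (@Zsplit _ a Y s k a0 Y0 s0 k0) lerD2l.
have h : ln ((a + s) / Y) <= (a + s) / Y - 1 by apply: ln_le_sub1; exact: divr_gt0.
have e : ln (Y / (a + s)) = - ln ((a + s) / Y).
  by rewrite -lnV ?posrE ?divr_gt0 // invf_div.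
rewrite e lerNl opprK (le_trans h) //.
have -> : (a + s) / Y - 1 = (a + s - Y) / Y by field; rewrite gt_eqF.
by [].
Qed.

Lemma Zup (R : realType) (a Y s k : R) : 0 < a -> 0 < Y -> 0 < a + s -> 0 < k ->
  Y <= a + s -> ln (a / (k^-1 * (a + s))) <= ln (a / (k^-1 * Y)).
Proof.
move=> a0 Y0 s0 k0 hY; rewrite (@Zsplit _ a Y s k a0 Y0 s0 k0) gerDl.
apply: ln_le0; rewrite ler_pdivrMr // mul1r //.
Qed.


Section S.
Context (R : realType) (dO : measure_display) (O : measurableType dO)
  (P : probability O R).

Lemma intE (D : set O) (X : O -> R) : measurable D ->
  P.-integrable D (fun w => (X w)%:E) ->
  (\int[P]_(w in D) (X w)%:E = (fine (\int[P]_(w in D) (X w)%:E))%:E)%E.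
Proof. by move=> mD h; rewrite fineK //; exact: integrable_fin_num. Qed.

Lemma PE (D : set O) : measurable D -> P D = (fine (P D))%:E.
Proof. by move=> mD; rewrite fineK//; exact: fin_num_measure. Qed.

Lemma cexpectE (D : set O) (X : O -> R) : measurable D ->
  P.-integrable D (fun w => (X w)%:E) ->
  cexpect P D X = ((fine (P D))^-1 * fine (\int[P]_(w in D) (X w)%:E))%:E.
Proof. by move=> mD h; rewrite /cexpect (@intE D _ mD h). Qed.

Lemma cvarE (D : set O) (X : O -> R) : measurable D ->
  P.-integrable D (fun w => (X w)%:E) ->
  P.-integrable D (fun w => (X w ^+ 2)%:E) ->
  let p := fine (P D) in
  let d1 := fine (\int[P]_(w in D) (X w)%:E) in
  let d2 := fine (\int[P]_(w in D) (X w ^+ 2)%:E) in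
  let m := p^-1 * d1 in
  cvar P D X = (p^-1 * (d2 - 2 * m * d1 + m ^+ 2 * p))%:E.
Proof.
move=> mD h1 h2 p d1 d2 m.
rewrite /cvar (@cexpectE D _ mD h1) /= -/d1 -/p -/m /cexpect.
suff HI : (\int[P]_(w in D) ((X w - m) ^+ 2)%:E = (d2 - 2 * m * d1 + m ^+ 2 * p)%:E)%E.
  by rewrite HI -EFinM.
have hc : P.-integrable D (fun w => ((-(2 * m)) * X w)%:E).
  exact: (integrableZl mD (- (2 * m)) h1).
have hk : P.-integrable D (fun w => (m ^+ 2)%:E).
  exact: finite_measure_integrable_cst.
transitivity (\int[P]_(w in D) ((X w ^+ 2)%:E + (((-(2 * m)) * X w)%:E
   + (m ^+ 2)%:E)))%E.
  by apply: eq_integral => w _; rewrite -!EFinD; congr (_%:E); rewrite /=; ring.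
rewrite integralD//; last exact: integrableD.
rewrite integralD// integral_cst// (@intE D _ mD h2) -/d2.
under eq_integral do rewrite EFinM.
rewrite integralZl// (@intE D _ mD h1) -/d1.
rewrite [X in ((m ^+ 2)%:E * X)%E](_ : _ = p%:E); last first.
  by rewrite /p fineK //; exact: fin_num_measure.
by rewrite -!EFinM -!EFinD; congr (_%:E); ring.
Qed.


Lemma splitI (A : set O) (g : O -> \bar R) : measurable A ->
  measurable_fun setT g ->
  (\int[P]_(w in setT) g w = \int[P]_(w in A) g w + \int[P]_(w in ~` A) g w)%E.
Proof.
move=> mA mg; rewrite -(setUv A) integral_setU //.
- exact: measurableC.
- by rewrite setUv.
- by rewrite /disj_set setICr.
Qed.

Lemma var_part (A : set O) (X : O -> R) : measurable A ->
  P.-integrable setT (fun w => (X w)%:E) ->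
  P.-integrable setT (fun w => (X w ^+ 2)%:E) ->
  (0 < P A)%E -> (0 < P (~` A))%E ->
  (cvar P A X <= cvar P (~` A) X)%E ->
  (cvar P A X <= cvar P setT X)%E.
Proof.
move=> mA h1 h2 pA0 pC0.
have mC : measurable (~` A) by exact: measurableC.
have hA1 := integrableS measurableT mA (@subsetT _ _) h1.
have hA2 := integrableS measurableT mA (@subsetT _ _) h2.
have hC1 := integrableS measurableT mC (@subsetT _ _) h1.
have hC2 := integrableS measurableT mC (@subsetT _ _) h2.
rewrite (@cvarE A X mA hA1 hA2) (@cvarE _ X mC hC1 hC2) (@cvarE setT X measurableT h1 h2) /=.
rewrite (@splitI A _ mA (measurable_int _ h1)) (@splitI A _ mA (measurable_int _ h2)).
rewrite (@intE A _ mA hA1) (@intE A _ mA hA2) (@intE _ _ mC hC1) (@intE _ _ mC hC2).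
rewrite probability_setT probability_setC // /=.
have fA : P A \is a fin_num by exact: fin_num_measure.
have pAp : 0 < fine (P A) by apply: fine_gt0; rewrite pA0 ltey_eq fA.
rewrite probability_setC // in pC0.
have pS : fine (1 - P A) = 1 - fine (P A) by rewrite fineB.
have pCp : 0 < fine (1 - P A) by apply: fine_gt0; rewrite pC0 /= ltey_eq fin_numB fA.
rewrite !lee_fin invr1 !mul1r mulr1.
move: pAp pCp pS.
set pA := fine (P A).
set pC := fine (1 - P A).
set a1 := fine (\int[P]_(w in A) (X w)%:E).
set a2 := fine (\int[P]_(w in A) (X w ^+ 2)%:E).
set c1 := fine (\int[P]_(w in ~` A) (X w)%:E).
set c2 := fine (\int[P]_(w in ~` A) (X w ^+ 2)%:E).
exact: alg_var.
Qed.
Lemma bias_pt n (x : 'I_n -> O -> R)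
  (mx : forall j, measurable_fun setT (x j))
  (xp : forall j w, 0 < x j w) (c : R) (c0 : 0 <= c)
  (Ex : forall j, (\int[P]_w (x j w)%:E = c%:E)%E)
  (a : R) (a0 : 0 < a) (A : set O) (mA : measurable A) (PA0 : (0 < P A)%E)
  (hA : forall w, A w -> forall j, c < x j w)
  (intZ : P.-integrable setT
     (fun w => (ln (a / ((n.+1%:R)^-1 * (a + \sum_(j < n) x j w))))%:E)) :
  (cexpect P A (fun w => ln (a / ((n.+1%:R)^-1 * (a + \sum_(j < n) x j w))))
   <= cexpect P setT (fun w => ln (a / ((n.+1%:R)^-1 * (a + \sum_(j < n) x j w)))))%E.
Proof.
set Z := fun w => _.
set k : R := n.+1%:R.
set Y := a + n%:R * c.
set Z0 := ln (a / (k^-1 * Y)).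
have k0 : 0 < k by rewrite ltr0n.
have Y0 : 0 < Y by rewrite /Y; apply: ltr_wpDr => //; apply: mulr_ge0.
have s0 w : 0 <= \sum_(j < n) x j w by apply: sumr_ge0 => j _; exact: ltW.
have as0 w : 0 < a + \sum_(j < n) x j w by apply: ltr_wpDr.
have iZA : P.-integrable A (fun w => (Z w)%:E).
  exact: (integrableS measurableT mA (@subsetT _ _) intZ).
have hAle : (\int[P]_(w in A) (Z w)%:E <= (Z0 * fine (P A))%:E)%E.
  have h1 : (\int[P]_(w in A) (Z w)%:E <= \int[P]_(w in A) (Z0)%:E)%E.
    apply: le_integral => //; first exact: finite_measure_integrable_cst.
    move=> w /[!inE] Aw; rewrite lee_fin /Z /Z0; apply: Zup => //.
    rewrite /Y lerD2l.
    have : \sum_(j < n) c <= \sum_(j < n) x j w.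
      by apply: ler_sum => j _; apply: ltW; exact: hA.
    by rewrite sumr_const card_ord mulr_natl.
  apply: (le_trans h1).
  rewrite integral_cst //.
  rewrite [X in (_ * X)%E](_ : _ = (fine (P A))%:E); last first.
    by rewrite fineK //; exact: fin_num_measure.
  by [].
set s := fun w => \sum_(j < n) x j w.
have mxE j : measurable_fun setT (fun w => (x j w)%:E) by exact/measurable_EFinP.
have iS : P.-integrable setT (fun w => (s w)%:E).
  rewrite /s; under eq_fun do rewrite -sumEFin.
  apply: (integrable_sum measurableT) => j _.
  apply/integrableP; split => //.
  under eq_integral do rewrite gee0_abs ?lee_fin ?ltW //.
  by rewrite Ex ltry.
have Es : (\int[P]_w (s w)%:E = (n%:R * c)%:E)%E.
  rewrite /s; under eq_integral do rewrite -sumEFin.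
  rewrite ge0_integral_sum //; last by move=> j w _; rewrite lee_fin ltW.
  under eq_bigr do rewrite Ex.
  by rewrite sumEFin sumr_const card_ord mulr_natl.
have hT : (Z0%:E <= \int[P]_w (Z w)%:E)%E.
  have iL : P.-integrable setT (fun w => ((Z0 + Y^-1 * (Y - a))%:E + (- Y^-1)%:E * (s w)%:E)%E).
    apply: integrableD => //; first exact: finite_measure_integrable_cst.
    exact: integrableZl.
  have hL : (\int[P]_w ((Z0 + Y^-1 * (Y - a))%:E + (- Y^-1)%:E * (s w)%:E)%E
     <= \int[P]_w (Z w)%:E)%E.
    apply: le_integral => // w _.
    rewrite -EFinM -EFinD lee_fin /Z /Z0.
    have hz := @Zlow _ a Y (s w) k a0 Y0 (as0 w) k0.
    have -> : Z0 + Y^-1 * (Y - a) + - Y^-1 * s w = Z0 - (a + s w - Y) / Y.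
      by rewrite /s; field; rewrite gt_eqF.
    exact: hz.
  apply: (le_trans _ hL).
  rewrite integralD //; first last.
  - exact: integrableZl.
  - exact: finite_measure_integrable_cst.
  rewrite integral_cst // integralZl // Es.
  rewrite [X in ((Z0 + _)%:E * X)%E](_ : _ = 1%E); last exact: probability_setT.
  rewrite mule1.
  rewrite -EFinM -EFinD lee_fin le_eqVlt; apply/orP; left; apply/eqP.
  rewrite /Y; field; rewrite -/Y; by rewrite gt_eqF.
rewrite (@cexpectE A _ mA iZA) (@cexpectE setT _ measurableT intZ).
rewrite probability_setT /= invr1 mul1r lee_fin.
rewrite (@intE A _ mA iZA) lee_fin in hAle.
rewrite (@intE setT _ measurableT intZ) lee_fin in hT.
have fA : P A \is a fin_num by exact: fin_num_measure.
have pAp : 0 < fine (P A) by apply: fine_gt0; rewrite PA0 ltey_eq fA.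
apply: le_trans hT.
rewrite mulrC ler_pdivrMr //.
Qed.

End S.

Theorem theorem2 (R : realType) (dU dV dO : measure_display)
  (U : measurableType dU) (V : measurableType dV) (O : measurableType dO)
  (PUV : probability (U * V)%type R)
  (f : U -> V -> R) (mf : measurable_fun [set: U * V] (fun x => f x.1 x.2))
  (n : nat) (* k = n + 1; the negatives V_2..V_k are Vn 0, ..., Vn (n-1) *)
  (P : probability O R) (Vn : 'I_n -> O -> V)
  (mVn : forall j, measurable_fun [set: O] (Vn j))
  (iid : iid_with_law P Vn (margV PUV))
  (B : U -> set R) (mB : forall u, measurable (B u))
  (hc : forall u, (cfun PUV f u < +oo)%E)
  (hB : forall u, B u `<=` [set x | (cfun PUV f u < x%:E)%E])
  (hS : forall u, (0 < margV PUV (S_B f B u))%E)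
  (hSc : forall u, (0 < P (~` negs_in Vn (S_B f B u)))%E)
  (intZ : forall u v1, P.-integrable [set: O] (fun w => (Zstat f Vn u v1 w)%:E))
  (intZ2 : forall u v1,
     P.-integrable [set: O] (fun w => ((Zstat f Vn u v1 w) ^+ 2)%:E))
  (hvar : forall u v1,
     (cvar P (negs_in Vn (S_B f B u)) (Zstat f Vn u v1)
      <= cvar P (~` negs_in Vn (S_B f B u)) (Zstat f Vn u v1))%E) :
  (Bias PUV P (fun _ => [set: O]) f Vn
     <= Bias PUV P (fun u => negs_in Vn (S_B f B u)) f Vn)%E /\
  (forall u v1,
     (cvar P (negs_in Vn (S_B f B u)) (Zstat f Vn u v1)
      <= cvar P [set: O] (Zstat f Vn u v1))%E).
Proof.
have mfu u : measurable_fun setT (f u).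
  exact: (measurableT_comp mf (pair1_measurable u)).
have mS u : measurable (S_B f B u).
  have h := (measurableT_comp (@measurable_expR R) (mfu u)) measurableT (B u) (mB u).
  by rewrite setTI in h.
have mA u : measurable (negs_in Vn (S_B f B u)).
  pose F : nat -> set O := fun k =>
    match @insub _ (fun k => k < n)%N 'I_n k with
    | Some j => Vn j @^-1` S_B f B u | None => setT end.
  have -> : negs_in Vn (S_B f B u) = \bigcap_(k in setT) F k.
    apply/seteqP; split => w /=.
    - move=> h k _; rewrite /F; case: insubP => // j _ _; exact: h.
    - move=> h j; have := h (val j) I; rewrite /F valK; exact.
  apply: bigcap_measurableType => k _; rewrite /F; case: insubP => // j _ _.
  by have := mVn j measurableT _ (mS u); rewrite setTI.
have PA0 u : (0 < P (negs_in Vn (S_B f B u)))%E.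
  have -> : negs_in Vn (S_B f B u) = [set w | forall j, Vn j w \in S_B f B u].
    by apply/seteqP; split => w /= h j; [rewrite inE; exact: h|have := h j; rewrite inE].
  have mSj : forall j : 'I_n, measurable ((fun=> S_B f B u) j) by move=> j; exact: mS.
  rewrite (iid.2 _ mSj).
  apply: (big_ind (fun x => 0 < x)%E) => //; first by move=> x y; exact: mule_gt0.
  by move=> j _; rewrite iid.1 //; exact: hS.
split; last first.
  move=> u v1; apply: var_part => //; exact: hvar.
rewrite /Bias; apply: leeB => //.
apply: le_integral_nm => -[u v1] /=.
have fc : cfun PUV f u \is a fin_num.
  rewrite ge0_fin_numE ?hc //; apply: integral_ge0 => v _; exact: expR_ge0.
rewrite /Zstat.
apply: (@bias_pt R dO O P n (fun j w => expR (f u (Vn j w)))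
  _ _ (fine (cfun PUV f u))).
- move=> j; exact: (measurableT_comp (@measurable_expR R) (measurableT_comp (mfu u) (mVn j))).
- by move=> j w; exact: expR_gt0.
- by rewrite fine_ge0 // integral_ge0 // => v _; exact: expR_ge0.
- move=> j; rewrite fineK // /cfun.
  have mg : measurable_fun setT (fun v => (expR (f u v))%:E).
    exact/measurable_EFinP/(measurableT_comp (@measurable_expR R) (mfu u)).
  rewrite (eq_measure_integral (pushforward P (Vn j))); last first.
    by move=> A0 mA0 _; exact: (esym (iid.1 j A0 mA0)).
  rewrite (ge0_integral_pushforward (mVn j)) //.
- exact: expR_gt0.
- exact: mA.
- exact: PA0.
- move=> w Aw j; rewrite -lte_fin fineK //; exact: (hB u _ (Aw j)).
- exact: intZ.
Qed.
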